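(* Let $I\subseteq R$ be a good ideal and let $Q\in\mathbb N$. Then there exists an integer $L(Q)$ such that for every $l\ge L(Q)$ and every $m\in G(I^l)$ there is an index $i\in\{1,\dots,n\}$ with $m=m'\mu_i^Q$ for some $m'\in G(I^{l-Q})$.
   Context: Let $\mathbb K$ be a field, $R=\mathbb K[x_1,\dots,x_n]$, $\mathfrak m=\langle x_1,\dots,x_n\rangle$, $\mathbb N=\{0,1,2,\dots\}$. A monomial $x_1^{\alpha_1}\cdots x_n^{\alpha_n}$ is identified with the point $(\alpha_1,\dots,\alpha_n)\in\mathbb N^n$. For a monomial ideal $I$, $G(I)$ denotes its (unique) minimal monomial generating set. If $I$ is an $\mathfrak m$-primary monomial ideal, then for each $i$ there is a unique $d_i\ge1$ with $x_i^{d_i}\in G(I)$; write $\mu_i=x_i^{d_i}$. For $(a_1,\dots,a_n)\in\mathbb N^n$ the box associated to $I$ is $B_{a_1,\dots,a_n}=([a_1d_1,(a_1+1)d_1]\times\cdots\times[a_nd_n,(a_n+1)d_n])\cap\mathbb N^n$; a monomial belongs to a box if its exponent vector does. An $\mathfrak m$-primary monomial ideal $I$ is called good if for every integer $l\ge1$, every element of $G(I^l)$ belongs to some box $B_{a_1,\dots,a_n}$ with $a_1+\dots+a_n=l-1$. *)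

(* Defs.v *)
(* Monomials of K[x_1..x_n] are identified with exponent
   vectors in N^n; a monomial ideal is identified with its (upward closed)
   set of monomials. *)
From mathcomp Require Import all_boot.
Set Implicit Arguments. Unset Strict Implicit. Unset Printing Implicit Defensive.

Definition mon (n : nat) := {ffun 'I_n -> nat}.

Definition mone (n : nat) : mon n := [ffun => 0].
Definition mmul (n : nat) (a b : mon n) : mon n := [ffun i => a i + b i].
Definition xpow (n : nat) (i : 'I_n) (e : nat) : mon n :=
  [ffun j => if j == i then e else 0].
Definition mdiv (n : nat) (a b : mon n) : bool := [forall i, a i <= b i].
Definition mprod (n : nat) (s : seq (mon n)) : mon n := foldr (@mmul n) (mone n) s.

Definition monomial_ideal (n : nat) (I : mon n -> Prop) : Prop :=
  forall a b, I a -> mdiv a b -> I b.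

Definition pow_ideal (n : nat) (I : mon n -> Prop) (l : nat) : mon n -> Prop :=
  fun m => exists s : seq (mon n),
    size s = l /\ (forall g, g \in s -> I g) /\ mdiv (mprod s) m.

(* m belongs to the minimal monomial generating set G(I) *)
Definition mingen (n : nat) (I : mon n -> Prop) (m : mon n) : Prop :=
  I m /\ forall m', I m' -> mdiv m' m -> m' = m.

Definition m_primary (n : nat) (I : mon n -> Prop) : Prop :=
  monomial_ideal I /\ ~ I (mone n) /\ forall i : 'I_n, exists e, I (xpow i e).

Definition in_box (n : nat) (d : 'I_n -> nat) (a : mon n) (m : mon n) : Prop :=
  forall i, a i * d i <= m i <= (a i + 1) * d i.

(* good ideal, with d_i the exponents such that x_i^{d_i} in G(I) *)
Definition good (n : nat) (I : mon n -> Prop) (d : 'I_n -> nat) : Prop :=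
  forall l, 1 <= l -> forall m, mingen (pow_ideal I l) m ->
    exists a : mon n, \sum_(i < n) a i = l - 1 /\ in_box d a m.

(* Main.v *)
Require Import Defs.
From mathcomp Require Import all_boot.
From mathcomp Require Import zify.
From Stdlib Require Import Classical.
Set Implicit Arguments. Unset Strict Implicit. Unset Printing Implicit Defensive.

Section Basic.
Variable n : nat.

Lemma mdivP (a b : mon n) : reflect (forall i, a i <= b i) (mdiv a b).
Proof. exact: (iffP forallP). Qed.

Lemma mdivE (a b : mon n) : mdiv a b -> forall i, a i <= b i.
Proof. by move/mdivP. Qed.

Lemma mdiv_refl (a : mon n) : mdiv a a.
Proof. by apply/mdivP. Qed.

Lemma mprodE (s : seq (mon n)) i : mprod s i = \sum_(g <- s) g i.
Proof.
elim: s => [|g s IH]; first by rewrite big_nil /mprod /= /mone ffunE.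
by rewrite big_cons /mprod /= /mmul ffunE -IH.
Qed.

Lemma mprod_nseq c (x : mon n) i : mprod (nseq c x) i = c * x i.
Proof.
elim: c => [|c IH]; first by rewrite /mprod /= /mone ffunE.
by rewrite /mprod /= /mmul ffunE -/(mprod _) IH mulSn.
Qed.

Lemma pow_mul (I : mon n -> Prop) a b u v :
  pow_ideal I a u -> pow_ideal I b v -> pow_ideal I (a + b) (mmul u v).
Proof.
move=> [s1 [h1 [h2 h3]]] [s2 [k1 [k2 k3]]]; exists (s1 ++ s2); split.
  by rewrite size_cat h1 k1.
split; first by move=> g; rewrite mem_cat => /orP [/h2|/k2].
apply/mdivP => j; rewrite mprodE big_cat /mmul ffunE -!mprodE.
exact: (leq_add (mdivE h3 j) (mdivE k3 j)).
Qed.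

Lemma pow_mono (I : mon n -> Prop) l u v :
  pow_ideal I l u -> mdiv u v -> pow_ideal I l v.
Proof.
move=> [s [h1 [h2 h3]]] uv; exists s; do 2!split => //.
apply/mdivP => j; apply: leq_trans (mdivE h3 j) (mdivE uv j).
Qed.

Lemma sum_lt (a b : mon n) : mdiv a b -> a <> b -> \sum_(k < n) a k < \sum_(k < n) b k.
Proof.
move=> /mdivP ab ne.
case: (boolP [exists k, a k < b k]) => [/existsP [k hk]|/existsPn hn].
  rewrite (bigD1 k) //= [X in _ < X](bigD1 k) //=.
  have : \sum_(j | j != k) a j <= \sum_(j | j != k) b j by apply: leq_sum.
  by move=> h; exact: (leq_add hk h).
exfalso; apply: ne; apply/ffunP => k.
by apply/eqP; rewrite eqn_leq ab /= leqNgt hn.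
Qed.

Lemma exists_min (J : mon n -> Prop) m : J m -> exists m', mingen J m' /\ mdiv m' m.
Proof.
move: {2}(\sum_(k < n) m k) (leqnn (\sum_(k < n) m k)) => N.
elim: N m => [|N IH] m hN hJ.
  case: (classic (forall m', J m' -> mdiv m' m -> m' = m)) => [Hm|Hn].
    by exists m; split; [split|apply: mdiv_refl].
  exfalso; apply: Hn => m' Jm' dm'; apply: NNPP => ne.
  have := sum_lt dm' ne; lia.
case: (classic (forall m', J m' -> mdiv m' m -> m' = m)) => [Hm|Hn].
  by exists m; split; [split|apply: mdiv_refl].
have [m' [Jm' [dm' ne]]] : exists m', J m' /\ mdiv m' m /\ m' <> m.
  apply: NNPP => H; apply: Hn => m' Jm' dm'; apply: NNPP => ne.
  by apply: H; exists m'.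
have lt := sum_lt dm' ne.
have [m'' [h1 h2]] := IH m' (ltac:(lia)) Jm'.
exists m''; split => //; apply/mdivP => j.
exact: leq_trans (mdivE h2 j) (mdivE dm' j).
Qed.

End Basic.
Section Main.
Variables (n : nat) (I : mon n -> Prop) (d : 'I_n -> nat).
Hypotheses (hI : m_primary I) (hd : forall i : 'I_n, mingen I (xpow i (d i)))
  (hgood : good I d).

Let D := \prod_(k < n) d k.

Lemma d_gt0 k : 0 < d k.
Proof.
case: (hd k) => Ik _; rewrite lt0n; apply/negP => /eqP h0.
apply: hI.2.1; suff ->: mone n = xpow k (d k) by [].
by apply/ffunP => j; rewrite !ffunE h0; case: (j == k).
Qed.

Lemma D_gt0 : 0 < D.
Proof. exact: prodn_gt0 d_gt0. Qed.

Lemma dvd_dD k : d k %| D.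
Proof. by rewrite /D (bigD1 k) //= dvdn_mulr. Qed.

Let w k := D %/ d k.
Lemma dw k : w k * d k = D.
Proof. exact: divnK (dvd_dD k). Qed.

Definition psi (v : mon n) := \sum_(k < n) v k * w k.

Lemma pow1 m : mingen I m -> mingen (pow_ideal I 1) m.
Proof.
move=> [Im hmin]; split.
  exists [:: m]; split => //; split; first by move=> g; rewrite inE => /eqP ->.
  by apply/mdivP => j; rewrite /mprod /= /mmul /mone !ffunE addn0.
move=> m' [s [h1 [h2 h3]]] dm; apply: hmin => //.
case: s h1 h2 h3 => [|x [|]] //= _ h2 h3.
apply: hI.1 (h2 x (mem_head _ _)) _.
by apply/mdivP => j; have := mdivE h3 j; rewrite /mmul /mone !ffunE addn0.
Qed.

Lemma gen_le g : mingen I g -> forall k, g k <= d k.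
Proof.
move=> hg k; have [a [ha hb]] := hgood (leqnn 1) (pow1 hg).
have : a k <= \sum_(i < n) a i by rewrite (bigD1 k) //= leq_addr.
rewrite ha subnn leqn0 => /eqP ak.
by have := hb k; rewrite ak /= add0n mul1n.
Qed.

Lemma psi_ge g : I g -> D <= psi g.
Proof.
move=> Ig.
have hp : pow_ideal I D.+1 (mprod (nseq D.+1 g)).
  exists (nseq D.+1 g); split; first by rewrite size_nseq.
  split; last exact: mdiv_refl.
  by move=> x /nseqP [-> _].
have [h [hh hdiv]] := exists_min hp.
have [a [ha hb]] := hgood (ltn0Sn D) hh.
have e1 : D * D = \sum_(k < n) a k * d k * w k.
  have -> : \sum_(k < n) a k * d k * w k = \sum_(k < n) a k * D.
    by apply: eq_bigr => k _; rewrite -mulnA [d k * _]mulnC dw.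
  by rewrite -big_distrl /= ha subn1.
have e2 : \sum_(k < n) a k * d k * w k <= \sum_(k < n) h k * w k.
  apply: leq_sum => k _; apply: leq_mul => //.
  by case/andP: (hb k).
have e3 : \sum_(k < n) h k * w k <= \sum_(k < n) D.+1 * g k * w k.
  apply: leq_sum => k _; apply: leq_mul => //.
  by have := mdivE hdiv k; rewrite mprod_nseq.
have e4 : \sum_(k < n) D.+1 * g k * w k = D.+1 * psi g.
  by rewrite /psi big_distrr; apply: eq_bigr => k _; rewrite -mulnA.
have : D * D <= D.+1 * psi g by rewrite e1 -e4; exact: leq_trans e2 e3.
nia.
Qed.

Lemma split_c (b : mon n) t : t <= \sum_(k < n) b k ->
  exists c : mon n, \sum_(k < n) c k = t /\ forall k, c k <= b k.
Proof.
elim: t => [|t IH] ht.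
  exists [ffun => 0]; split; last by move=> k; rewrite ffunE.
  by apply: big1 => k _; rewrite ffunE.
have [c [hc1 hc2]] := IH (ltnW ht).
case: (boolP [exists k, c k < b k]) => [/existsP [k hk]|/existsPn hn]; last first.
  have : \sum_(k < n) b k <= \sum_(k < n) c k.
    by apply: leq_sum => k _; rewrite leqNgt; apply: hn.
  lia.
exists [ffun j => c j + (j == k)]; split.
  rewrite (bigD1 k) //= ffunE eqxx.
  have -> : \sum_(j < n | j != k) [ffun j0 => c j0 + (j0 == k)] j =
            \sum_(j < n | j != k) c j.
    by apply: eq_bigr => j hj; rewrite ffunE (negbTE hj) addn0.
  by move: hc1; rewrite (bigD1 k) //= => <-; rewrite addn1 addSn.
move=> j; rewrite ffunE; case: (eqVneq j k) => [->|_]; last by rewrite addn0.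
by rewrite addn1.
Qed.

Lemma sum_split_pred1 (r : seq (mon n)) (x : mon n) j :
  \sum_(g <- r) g j = count_mem x r * x j + \sum_(g <- filter (predC1 x) r) g j.
Proof.
rewrite (bigID (pred1 x)) /= big_filter.
congr (_ + _).
rewrite (eq_bigr (fun _ => x j)); last by move=> g /eqP ->.
by rewrite big_const_seq iter_addn_0 mulnC.
Qed.

Lemma exch (s : seq (mon n)) : (forall g, g \in s -> D <= psi g) ->
  exists (p : mon n) (r : seq (mon n)),
  [/\ \sum_(k < n) p k + size r = size s, {subset r <= s},
      (forall x, count_mem x r < D) &
      forall j, p j * d j + \sum_(g <- r) g j <= \sum_(g <- s) g j].
Proof.
elim: s => [|x s IH] hs.
  exists [ffun => 0], [::]; split => //.
  - by rewrite addn0; apply: big1 => k _; rewrite ffunE.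
  - by move=> x; exact: D_gt0.
  - by move=> j; rewrite ffunE !big_nil.
have [p [r [h1 h2 h3 h4]]] : exists (p : mon n) (r : seq (mon n)),
  [/\ \sum_(k < n) p k + size r = size s, {subset r <= s},
      (forall x, count_mem x r < D) &
      forall j, p j * d j + \sum_(g <- r) g j <= \sum_(g <- s) g j].
  by apply: IH => g hg; apply: hs; rewrite inE hg orbT.
case: (ltnP (count_mem x r).+1 D) => hc.
  exists p, (x :: r); split.
  - by rewrite /= addnS -h1.
  - by move=> y; rewrite !inE => /orP [->//|/h2 ->]; rewrite orbT.
  - move=> y /=; case: (eqVneq x y) => [<-|_] /=; first by rewrite add1n.
    by rewrite add0n.
  - by move=> j; rewrite !big_cons; have := h4 j; lia.
have hcx : (count_mem x r).+1 = D by have := h3 x; lia.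
have [c [hc1 hc2]] := split_c (b := [ffun k => x k * w k]) (t := D)
  (ltac:(rewrite (eq_bigr (fun k => x k * w k)); [exact: hs (mem_head _ _)|];
         by move=> k _; rewrite ffunE)).
exists [ffun j => p j + c j], (filter (predC1 x) r); split.
- rewrite (eq_bigr (fun k => p k + c k)); last by move=> k _; rewrite ffunE.
  rewrite big_split /= hc1 size_filter.
  have hsz : count_mem x r + count (predC1 x) r = size r := count_predC _ _.
  rewrite -h1; move: (\sum_(i < n) p i) hcx hsz => S; rewrite /= => h5 h6; by rewrite -h6 -h5 addnS addSn -addnA.
- by move=> y; rewrite mem_filter => /andP [_ /h2]; rewrite inE => ->; rewrite orbT.
- move=> y; rewrite count_filter; apply: leq_ltn_trans (h3 y).
  by apply: sub_count => z /andP [].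
- move=> j; rewrite ffunE big_cons.
  have := h4 j; rewrite (sum_split_pred1 r x j).
  have hcj : c j * d j <= x j * D.
    by rewrite -(dw j) mulnA leq_mul2r; have := hc2 j; rewrite ffunE => ->; rewrite orbT.
  rewrite -hcx mulnS in hcj.
  rewrite mulnDl => H.
  apply: leq_trans (leq_add (leq_add (leqnn _) hcj) (leqnn _)) _.
  have e : forall a b c e : nat, a + (b + b * c) + e = b + (a + (c * b + e)).
    by move=> *; lia.
  by rewrite e; exact: leq_add (leqnn _) H.
Qed.
Let M := \sum_(k < n) d k.
Definition Eset : seq (mon n) :=
  map (fun f : {ffun 'I_n -> 'I_M.+1} => ([ffun k => nat_of_ord (f k)] : mon n))
    (enum {ffun 'I_n -> 'I_M.+1}).

Lemma small_in_E (v : mon n) : (forall k, v k <= d k) -> v \in Eset.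
Proof.
move=> hv; apply/mapP; exists [ffun k => (inord (v k) : 'I_M.+1)]; first by rewrite mem_enum.
apply/ffunP => k; rewrite !ffunE inordK // ltnS; apply: leq_trans (hv k) _.
by rewrite /M (bigD1 k) //= leq_addr.
Qed.

Lemma sum_eq_count (y : mon n) (U : seq (mon n)) :
  \sum_(x <- U) (y == x : nat) = count_mem y U.
Proof.
elim: U => [|z U IH]; first by rewrite big_nil.
by rewrite big_cons IH /= eq_sym.
Qed.

Lemma size_count (U r : seq (mon n)) : uniq U -> {subset r <= U} ->
  size r = \sum_(x <- U) count_mem x r.
Proof.
move=> hU; elim: r => [|y r IH] hsub; first by rewrite big1.
rewrite /= (eq_bigr (fun x => (y == x : nat) + count_mem x r)) //.
rewrite big_split /= -IH; last by move=> z hz; apply: hsub; rewrite inE hz orbT.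
rewrite sum_eq_count count_uniq_mem // hsub ?mem_head //.
Qed.

Lemma count_bound (r : seq (mon n)) : (forall g, g \in r -> forall k, g k <= d k) ->
  (forall x, count_mem x r < D) -> size r <= size Eset * D.
Proof.
move=> hr hc.
rewrite (@size_count (undup Eset)) ?undup_uniq //; last first.
  by move=> g hg; rewrite mem_undup; apply: small_in_E; apply: hr.
apply: (@leq_trans (\sum_(x <- undup Eset) D)).
  by apply: leq_sum => x _; apply: ltnW.
rewrite big_const_seq iter_addn_0 count_predT mulnC leq_mul2r size_undup orbT //.
Qed.

Lemma pow_pure (p : mon n) : pow_ideal I (\sum_(k < n) p k) [ffun j => p j * d j].
Proof.
move Hs: (\sum_(k < n) p k) => N.
elim: N p Hs => [|N IH] p Hs.
  exists [::]; split => //; split => //.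
  by apply/mdivP => j; rewrite /mprod /= /mone ffunE.
have [k hk] : exists k, 0 < p k.
  case: (boolP [exists k, 0 < p k]) => [/existsP //|/existsPn hn].
  exfalso; move: Hs; rewrite big1 // => k _.
  by apply/eqP; rewrite -leqn0 leqNgt hn.
pose p' : mon n := [ffun j => p j - (j == k)].
have Hs' : \sum_(j < n) p' j = N.
  rewrite (bigD1 k) //= /p' ffunE eqxx.
  rewrite (eq_bigr (fun j => p j)); last by move=> j hj; rewrite ffunE (negbTE hj) subn0.
  move: Hs; rewrite (bigD1 k) //= => H; apply/eqP; rewrite -eqSS -H; apply/eqP.
  by rewrite -addSn subn1 prednK.
have h1 : pow_ideal I 1 (xpow k (d k)).
  exists [:: xpow k (d k)]; split => //; split.
    by move=> g; rewrite inE => /eqP ->; case: (hd k).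
  by apply/mdivP => j; rewrite /mprod /= /mmul /mone !ffunE addn0.
have := pow_mul (IH p' Hs') h1; rewrite addn1 => /pow_mono; apply.
apply/mdivP => j; rewrite /mmul /p' !ffunE.
case: (eqVneq j k) => [->|ne]; last by rewrite subn0 addn0.
rewrite ?eqxx mulnBl mul1n subnK //.
by rewrite leq_pmull.
Qed.
Lemma main_sec Q : exists L : nat, Q <= L /\
    forall l, L <= l -> forall m, mingen (pow_ideal I l) m ->
      exists (i : 'I_n) (m' : mon n),
        mingen (pow_ideal I (l - Q)) m' /\ m = mmul m' (xpow i (d i * Q)).
Proof.
exists (Q + size Eset * D + n * Q + 1); split; first lia.
move=> l hl m [[s [hs1 [hs2 hs3]]] hmin].
have [s' [hs'1 hs'2 hs'3]] : exists s' : seq (mon n),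
  [/\ size s' = size s, (forall g, g \in s' -> mingen I g) &
      forall j, \sum_(g <- s') g j <= \sum_(g <- s) g j].
  elim: s {hs1 hs3} hs2 => [|x s IH] hs.
    by exists [::]; split => // j; rewrite !big_nil.
  have [s' [h1 h2 h3]] := IH (fun g hg => hs g (ltac:(by rewrite inE hg orbT))).
  have [x' [hx' dx']] := exists_min (hs x (mem_head _ _)).
  exists (x' :: s'); split.
  - by rewrite /= h1.
  - by move=> g; rewrite inE => /orP [/eqP ->|/h2].
  - by move=> j; rewrite !big_cons; apply: leq_add (mdivE dx' j) (h3 j).
have [p [r [h1 h2 h3 h4]]] := exch (fun g hg => psi_ge (hs'2 g hg).1).
have hr : size r <= size Eset * D.
  by apply: count_bound => // g /h2 /hs'2; exact: gen_le.
have hsumm : forall j, p j * d j + \sum_(g <- r) g j <= m j.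
  move=> j; apply: leq_trans (h4 j) _; apply: leq_trans (hs'3 j) _.
  by rewrite -mprodE; exact: (mdivE hs3 j).
have hl2 : size Eset * D + n * Q + Q < \sum_(k < n) p k + size r.
  by rewrite h1 hs'1 hs1; lia.
have [i hi] : exists i, Q <= p i.
  case: (boolP [exists i, Q <= p i]) => [/existsP //|/existsPn hn].
  have : \sum_(k < n) p k <= \sum_(k < n) Q.
    by apply: leq_sum => k _; apply: ltnW; rewrite ltnNge hn.
  rewrite big_const_ord iter_addn_0.
  move: hl2; move: (\sum_(k < n) p k) => S; lia.
have hpi : p i <= \sum_(k < n) p k by rewrite (bigD1 i) //= leq_addr.
pose xq := xpow i (d i * Q).
have hQd : Q * d i <= p i * d i by rewrite leq_mul2r hi orbT.
have hxq : forall j, xq j <= m j.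
  move=> j; rewrite /xq ffunE; case: eqP => [->|_] //.
  have := hsumm i; lia.
have rI : pow_ideal I (size r) (mprod r).
  exists r; split => //; split; last exact: mdiv_refl.
  by move=> g /h2 /hs'2 [].
exists i, [ffun j => m j - xq j]; split; last first.
  by apply/ffunP => j; rewrite /mmul !ffunE subnK //; have := hxq j; rewrite /xq ffunE.
split.
  pose p' : mon n := [ffun j => p j - (if j == i then Q else 0)].
  have e1 : \sum_(k < n) p' k = \sum_(k < n) p k - Q.
    rewrite (bigD1 i) //= [in RHS](bigD1 i) //= /p' ffunE eqxx.
    rewrite (eq_bigr (fun k => p k)); last by move=> k hk; rewrite ffunE (negbTE hk) subn0.
    by rewrite addnC addnBA // addnC.
  have Hs' : \sum_(k < n) p' k + size r = l - Q.
    rewrite e1 -hs1 -hs'1 -h1.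
    move: hpi; move: (\sum_(k < n) p k) => S; lia.
  have := pow_mul (pow_pure p') rI; rewrite Hs' => /pow_mono; apply.
  apply/mdivP => j; rewrite /mmul /p' !ffunE mprodE.
  have := hsumm j.
  case: (eqVneq j i) => [->|ne]; last by rewrite !subn0.
  rewrite mulnBl; lia.
move=> m'' hm'' hdv.
have hx : pow_ideal I Q xq.
  have := pow_pure [ffun j => if j == i then Q else 0].
  have -> : \sum_(k < n) [ffun j => if j == i then Q else 0] k = Q.
    rewrite (bigD1 i) //= ffunE eqxx big1 ?addn0 // => k hk.
    by rewrite ffunE (negbTE hk).
  move/pow_mono; apply; apply/mdivP => j; rewrite /xq !ffunE.
  by case: eqP => [->|_] //; rewrite mulnC.
have hp : pow_ideal I l (mmul m'' xq).
  by have := pow_mul hm'' hx; rewrite subnK //; lia.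
have e : mmul m'' xq = m.
  apply: hmin => //; apply/mdivP => j; rewrite /mmul ffunE.
  have := mdivE hdv j; rewrite ffunE => h; have := hxq j; lia.
by apply/ffunP => j; rewrite ffunE -e /mmul ffunE addnK.
Qed.
End Main.

Theorem mainTheorem9 (n : nat) (I : mon n -> Prop) (d : 'I_n -> nat)
  (hI : m_primary I)
  (hd : forall i : 'I_n, mingen I (xpow i (d i)))
  (hgood : good I d) (Q : nat) :
  exists L : nat, Q <= L /\
    forall l, L <= l -> forall m, mingen (pow_ideal I l) m ->
      exists (i : 'I_n) (m' : mon n),
        mingen (pow_ideal I (l - Q)) m' /\ m = mmul m' (xpow i (d i * Q)).
Proof. exact: (main_sec hI hd hgood Q). Qed.
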